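(* Let $\rho_1\in(0,1)$, $\rho_2\in(0,1-\rho_1)$ and let $\eta$ be a sample of $\mu^{\rho_1,\rho_2}$. There are constants $C,c>0$ such that for each interval $I\subseteq\mathbb{Z}$ of length $|I|=\ell$, \[ \mathbb{P}(\exists i\in I:\ \eta(i)=2)\ge1-Ce^{-c\ell}. \]
   Context: $\mu^{\rho_1,\rho_2}$ (queueing construction): let $(a(i))_{i\in\mathbb{Z}}$, $(s(i))_{i\in\mathbb{Z}}$ be independent families of i.i.d. Bernoulli variables with parameters $\rho_1$ and $\rho_1+\rho_2$; $\mathcal{A}_{[i,j]}=\sum_{k=i}^ja(k)$, $\mathcal{S}_{[i,j]}=\sum_{k=i}^js(k)$ (empty sums $0$); $Q_i=\sup_{j\ge i-1}(\mathcal{A}_{[i,j]}-\mathcal{S}_{[i,j]})$; $d(i)=1$ iff $s(i)=1$ and ($a(i)=1$ or $Q_{i+1}\ge1$) (equivalently, each $i$ with $a(i)=1$ is matched to the largest $j\le i$ with $s(j)=1$ not yet matched, and $d=1$ at matched sites). Set $\eta(i)=1$ if $d(i)=1$, $\eta(i)=2$ if $s(i)=1,d(i)=0$, $\eta(i)=+\infty$ if $s(i)=0$; $\mu^{\rho_1,\rho_2}$ is the law of $\eta$ (the translation-invariant stationary measure of the two-species TASEP; value $2$ = second class particle). An interval of length $\ell$ means $I=[u,v]\cap\mathbb{Z}$ with $v-u=\ell$. *)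

(* Defs.v *)
From HB Require Import structures.
From mathcomp Require Import all_boot all_order all_algebra.
From mathcomp Require Import all_classical all_reals all_analysis.
Set Implicit Arguments. Unset Strict Implicit. Unset Printing Implicit Defensive.
Import Order.TTheory GRing.Theory Num.Theory.
Local Open Scope classical_set_scope.
Local Open Scope ring_scope.

(* The site-values of the two-species TASEP: 1 (first class), 2 (second
   class), +infinity (hole). *)
Inductive species := First | Second | Hole.

Section Queue.
Context {T : Type}.

Definition segcount (x : int -> T -> bool) (i j : int) (t : T) : nat :=
  if @Order.lt _ int j i then 0%N
  else (\sum_(0 <= k < absz (j - i + 1)%R) (x (i + k%:Z)%R t : nat))%N.

Definition Qlen (R : realType) (a s : int -> T -> bool) (i : int) (t : T)
  : \bar R :=
  ereal_sup [set ((segcount a i j t)%:R - (segcount s i j t)%:R)%:E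
            | j in [set j : int | (i - 1 <= j)%R]].

Definition dep (R : realType) (a s : int -> T -> bool) (i : int) (t : T)
  : Prop :=
  s i t /\ (a i t \/ (1%:E <= Qlen R a s (i + 1) t)%E).

Definition eta_tasep (R : realType) (a s : int -> T -> bool) (i : int) (t : T)
  : species :=
  if pselect (dep R a s i t) then First
  else if s i t then Second else Hole.
End Queue.

Definition joint {T : Type} (a s : int -> T -> bool) (k : int + int) : T -> bool :=
  match k with inl i => a i | inr i => s i end.

Definition mutually_independent_bool {R : realType} {d : measure_display}
  {T : measurableType d} (P : probability T R) {I : eqType}
  (X : I -> T -> bool) : Prop :=
  forall (F : seq I) (b : I -> bool), uniq F ->
    P (\big[setI/setT]_(k <- F) [set t | X k t = b k]) =
    (\prod_(k <- F) P [set t | X k t = b k])%E.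

Definition queue_input {R : realType} {d : measure_display}
  {T : measurableType d} (P : probability T R) (rho1 rho2 : R)
  (a s : int -> T -> bool) : Prop :=
  [/\ forall k, measurable [set t | joint a s k t],
      forall i, P [set t | a i t] = rho1%:E,
      forall i, P [set t | s i t] = (rho1 + rho2)%:E
    & mutually_independent_bool P (joint a s)].

(* Main.v *)
Require Import Defs.
From HB Require Import structures.
From mathcomp Require Import all_boot all_order all_algebra.
From mathcomp Require Import all_classical all_reals all_analysis.
From mathcomp Require Import zify ring lra.
Import Order.TTheory GRing.Theory Num.Theory.
Local Open Scope classical_set_scope.
Local Open Scope ring_scope.
Set Implicit Arguments. Unset Strict Implicit. Unset Printing Implicit Defensive.

Definition cnt (f : int -> bool) (i : int) (n : nat) : nat :=
  (\sum_(0 <= k < n) (f (i + k%:Z)%R : nat))%N.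

Lemma cntD f i n m : cnt f i (n + m) = (cnt f i n + cnt f (i + n%:Z) m)%N.
Proof.
rewrite /cnt (@big_cat_nat _ _ _ n) //=; last by rewrite leq_addr.
congr (_ + _)%N.
rewrite -{1}(add0n n) big_addn. rewrite (_ : (n + m - n = m)%N); last by lia. apply: eq_bigr => k _.
rewrite PoszD; congr (nat_of_bool (f _)); lia.
Qed.

Lemma cnt1 f i : cnt f i 1 = f i.
Proof. by rewrite /cnt big_nat1 addr0. Qed.

Lemma cnt0 f i : cnt f i 0 = 0%N.
Proof. by rewrite /cnt big_geq. Qed.

Lemma cntS f i m : cnt f i m.+1 = (f i + cnt f (i + 1) m)%N.
Proof. by rewrite -add1n cntD cnt1. Qed.

Lemma segcountE {T} (x : int -> T -> bool) i j t : (i - 1 <= j)%R ->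
  segcount x i j t = cnt (fun k => x k t) i (absz (j - i + 1)).
Proof.
move=> hij; rewrite /segcount /cnt; case: ifP => // ji.
have -> : j - i + 1 = 0 by lia.
by rewrite big_geq.
Qed.

Lemma walk (a s : int -> bool) (u : int) (L : nat) :
  (forall n : nat, (n <= L)%N -> s (u + n%:Z) ->
     exists m, (0 < m)%N /\ (cnt s (u + n%:Z) m <= cnt a (u + n%:Z) m)%N) ->
  exists N, (L < N)%N /\ (cnt s u N <= cnt a u N)%N.
Proof.
move=> H.
suff: forall k n, (L.+1 - n <= k)%N -> (cnt s u n <= cnt a u n)%N ->
  exists N, (L < N)%N /\ (cnt s u N <= cnt a u N)%N.
  by move=> /(_ L.+1 0%N); rewrite subn0 cnt0 => /(_ (leqnn _) (leq0n _)).
elim=> [|k IH] n hk hc.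
  by exists n; split => //; lia.
case: (ltnP L n) => hLn; first by exists n.
case hs: (s (u + n%:Z)).
  have [m [m0 hm]] := H n hLn hs.
  apply: (IH (n + m)%N); first lia.
  by rewrite !cntD leq_add.
apply: (IH (n + 1)%N); first lia.
by rewrite !cntD !cnt1 hs leq_add.
Qed.
Lemma Qlen_ge1 (R : realType) {T} (a s : int -> T -> bool) i t :
  (1 <= Qlen R a s (i + 1) t)%E <->
  exists m, (cnt (fun k => s k t) (i + 1) m < cnt (fun k => a k t) (i + 1) m)%N.
Proof.
rewrite /Qlen; split.
  move=> h.
  have h2 : ((2^-1)%:E < (1 : \bar R))%E by rewrite lte_fin; lra.
  move: (lt_le_trans h2 h) => /ereal_sup_gt [y [j /= hj <-]].
  rewrite lte_fin => hy.
  exists (absz (j - i)).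
  rewrite !segcountE // in hy.
  have -> : absz (j - i) = absz (j - (i + 1) + 1) by congr absz; lia.
  rewrite ltnNge; apply/negP => hle.
  move: hle; rewrite -(ler_nat R) -subr_le0 => hle.
  have := lt_le_trans hy hle; by rewrite invr_lt0 ltNge (ler0n R 2).
move=> [m hm].
apply: le_trans (ereal_sup_ubound _); last first.
  exists (i + m%:Z) => /=; first lia.
  reflexivity.
rewrite lee_fin !segcountE; last lia.
have -> : absz (i + m%:Z - (i + 1) + 1) = m by lia.
move: hm; rewrite -(ler_nat R) -addn1 natrD => hm.
rewrite lerBrDr addrC; exact: hm.
lia. Qed.

Lemma no_second (R : realType) {T} (a s : int -> T -> bool) u (L : nat) t :
  ~ (exists i : int, (u <= i <= u + L%:Z)%R /\ eta_tasep R a s i t = Second) ->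
  exists N, (L < N)%N /\
    (cnt (fun k => s k t) u N <= cnt (fun k => a k t) u N)%N.
Proof.
move=> h; apply: walk => n hn hs.
have hnS : eta_tasep R a s (u + n%:Z) t <> Second.
  move=> e; apply: h; exists (u + n%:Z); split => //; apply/andP; split; lia.
move: hnS; rewrite /eta_tasep; destruct (pselect _) as [hd|hnd]; last first.
- by rewrite hs.
case: hd => hs' [ha|hq].
- by move=> _; exists 1%N; rewrite !cnt1 ha hs.
- move=> _; move/Qlen_ge1: hq => [m hm]; exists m.+1; split => //.
  rewrite !cntS hs; change (nat_of_bool true) with 1%N; rewrite add1n; exact: leq_trans hm (leq_addl _ _).
Qed.

Section Prob.
Context (R : realType) (d : measure_display) (T : measurableType d)
  (P : probability T R) (I : eqType) (X : I -> T -> bool) (p : I -> bool -> R).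
Hypothesis hX : forall k, measurable [set t | X k t].
Hypothesis hind : mutually_independent_bool P X.
Hypothesis hp : forall k b, P [set t | X k t = b] = (p k b)%:E.

Definition cyl (H : seq I) (c : I -> bool) : set T :=
  \big[setI/setT]_(k <- H) [set t | X k t = c k].

Lemma measXb k b : measurable [set t | X k t = b].
Proof.
case: b; first exact: hX.
rewrite (_ : [set t | X k t = false] = ~` [set t | X k t]).
  exact/measurableC/hX.
apply/seteqP; split => t /=; case: (X k t) => //.
Qed.

Lemma in_cyl H c t : cyl H c t <-> (forall k, k \in H -> X k t = c k).
Proof.
elim: H => [|k H IH]; rewrite /cyl ?big_nil ?big_cons.
  by split=> // _ k; rewrite in_nil.
split.
  move=> [h1 h2] j; rewrite in_cons => /orP [/eqP -> //| jH].
  exact: (IH.1 h2).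
move=> h; split; first by apply: h; exact: mem_head.
by apply/IH => j jH; apply: h; rewrite in_cons jH orbT.
Qed.

Lemma cyl_meas H c : measurable (cyl H c).
Proof.
elim: H => [|k H IH]; rewrite /cyl ?big_nil ?big_cons; first exact: measurableT.
exact: measurableI (measXb _ _) IH.
Qed.

Lemma cylP H c : uniq H -> P (cyl H c) = (\prod_(k <- H) p k (c k))%:E.
Proof.
move=> u; rewrite /cyl hind // -prodEFin; apply: eq_bigr => k _; exact: hp.
Qed.

Lemma p_ge0 k b : 0 <= p k b.
Proof. by rewrite -lee_fin -hp; exact: measure_ge0. Qed.

Lemma dep_meas (phi : (I -> bool) -> Prop) (F : seq I) :
  (forall y y', (forall k, k \in F -> y k = y' k) -> phi y -> phi y') ->
  measurable [set t | phi (fun k => X k t)].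
Proof.
elim: F phi => [|k F IH] phi hphi.
  case: (pselect (phi (fun _ => false))) => h.
    rewrite (_ : [set t | _] = setT); first exact: measurableT.
    apply/seteqP; split => t //= _; apply: (hphi _ _ _ h) => j.
    by rewrite in_nil.
  rewrite (_ : [set t | _] = set0); first exact: measurable0.
  apply/seteqP; split => t //= ht; apply: h; apply: (hphi _ _ _ ht) => j.
  by rewrite in_nil.
pose upd (y : I -> bool) b := fun j => if j == k then b else y j.
have e : [set t | phi (fun j => X j t)] =
   ([set t | X k t = true] `&` [set t | phi (upd (fun j => X j t) true)]) `|`
   ([set t | X k t = false] `&` [set t | phi (upd (fun j => X j t) false)]).
  apply/seteqP; split => t /=.
  - move=> ht; case hk: (X k t); [left|right]; split => //;
      apply: (hphi _ _ _ ht) => j _; rewrite /upd; case: eqP => // ->;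
      by rewrite hk.
  - move=> [[hk ht]|[hk ht]]; apply: (hphi _ _ _ ht) => j _; rewrite /upd;
      case: eqP => // ->; by rewrite hk.
have hb : forall b, measurable [set t | phi (upd (fun j => X j t) b)].
  move=> b; apply: (IH (fun y => phi (upd y b))) => y y' hyy'.
  apply: hphi => j; rewrite /upd in_cons.
  case: eqP => //= _ jF; exact: hyy' _ jF.
by rewrite e; apply: measurableU; apply: measurableI; [exact: measXb| exact: hb|exact: measXb| exact: hb].
Qed.


Lemma main_bound (phi : (I -> bool) -> Prop) (w : I -> bool -> R) :
  measurable [set t | phi (fun k => X k t)] -> (forall k b, 0 <= w k b) ->
  forall (F H : seq I) (c : I -> bool) (lam : R), 0 <= lam -> uniq (F ++ H) ->
  (forall y, (forall k, k \in H -> y k = c k) -> phi y ->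
     1 <= lam * \prod_(k <- F) w k (y k)) ->
  (P ([set t | phi (fun k => X k t)] `&` cyl H c) <=
   (lam * \prod_(k <- F) (w k true * p k true + w k false * p k false)
        * \prod_(k <- H) p k (c k))%:E)%E.
Proof.
move=> mphi w0; elim=> [|k F IH] H c lam lam0 uFH hphi.
  rewrite big_nil mulr1.
  have uH : uniq H by [].
  have pH : 0 <= \prod_(k <- H) p k (c k) by apply: prodr_ge0 => k _; exact: p_ge0.
  case: (leP 1 lam) => lam1.
    apply: (@le_trans _ _ (P (cyl H c))).
      apply: le_measure; first by rewrite inE; exact: measurableI mphi (cyl_meas _ _).
        by rewrite inE; exact: cyl_meas.
      exact: subIsetr.
    by rewrite cylP // lee_fin ler_peMl.
  rewrite (_ : _ `&` _ = set0); first by rewrite measure0 lee_fin mulr_ge0.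
  apply/seteqP; split => t // [ph cy].
  have := hphi _ ((in_cyl _ _ _).1 cy) ph.
  by rewrite big_nil mulr1 leNgt lam1.
rewrite big_cons.
have [kFH uFH'] : k \notin F ++ H /\ uniq (F ++ H).
  by move: uFH; rewrite cat_cons /= => /andP.
have kH : k \notin H by move: kFH; rewrite mem_cat negb_or => /andP [].
have uFkH : uniq (F ++ k :: H) by rewrite -cat1s uniq_catCA /= kFH uFH'.
pose cb b := fun j => if j == k then b else c j.
have cbH b j : j \in H -> cb b j = c j.
  move=> jH; rewrite /cb; case: eqP => // ejk.
  by move: jH; rewrite ejk (negbTE kH).
have cylb b : cyl (k :: H) (cb b) = [set t | X k t = b] `&` cyl H c.
  rewrite /cyl big_cons /cb eqxx; congr (_ `&` _); apply: eq_big_seq => j jH.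
  by rewrite -/(cb b j) cbH.
set A := [set t | phi (fun k => X k t)].
have splitA : A `&` cyl H c =
    (A `&` cyl (k :: H) (cb true)) `|` (A `&` cyl (k :: H) (cb false)).
  rewrite !cylb; apply/seteqP; split => t /=.
    move=> [ht hc]; case hk: (X k t); [left|right]; split => //; split => //.
  by move=> [[ht [_ hc]]|[ht [_ hc]]]; split.
have mAb b : measurable (A `&` cyl (k :: H) (cb b)).
  exact: measurableI mphi (cyl_meas _ _).
rewrite splitA measureU //; last first.
  rewrite !cylb; apply/seteqP; split => t // [[_ [h1 _]] [_ [h2 _]]].
  by move: h1 h2 => /= ->.
have IHb b : (P (A `&` cyl (k :: H) (cb b)) <=
    (lam * w k b * \prod_(j <- F) (w j true * p j true + w j false * p j false)
       * (p k b * \prod_(j <- H) p j (c j)))%:E)%E.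
  have := IH (k :: H) (cb b) (lam * w k b) (mulr_ge0 lam0 (w0 _ _)) uFkH.
  rewrite big_cons {3}/cb eqxx (eq_big_seq _ (fun j jH => congr1 (p j) (cbH b j jH))).
  apply => y hy ph.
  have hy' : forall j, j \in H -> y j = c j.
    by move=> j jH; rewrite (hy j _) ?cbH // in_cons jH orbT.
  have := hphi y hy' ph.
  by rewrite big_cons (hy k (mem_head _ _)) /cb eqxx mulrA.
apply: le_trans (leeD (IHb true) (IHb false)) _.
rewrite -EFinD lee_fin le_eqVlt; apply/orP; left; apply/eqP; ring.
Qed.
End Prob.

Lemma setXfalse {T} (f : T -> bool) : [set t | f t = false] = ~` [set t | f t].
Proof. by apply/seteqP; split => t /=; case: (f t). Qed.

Lemma prod_if (R : realType) (z : R) (f : nat -> bool) N :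
  \prod_(0 <= k < N) (if f k then z else 1) = z ^+ (\sum_(0 <= k < N) (f k : nat))%N.
Proof.
elim: N => [|N IH]; first by rewrite !big_geq.
rewrite !big_nat_recr //= IH exprD; case: (f N); by rewrite ?expr1 ?expr0 ?mulr1.
Qed.

Lemma cnt_eq f g u N : (forall k, (k < N)%N -> f (u + k%:Z) = g (u + k%:Z)) ->
  cnt f u N = cnt g u N.
Proof. by move=> h; apply: eq_big_nat => k /andP [_ hk]; rewrite h. Qed.

Definition pq (R : realType) (rho1 rho2 : R) (k : int + int) (b : bool) : R :=
  match k with
  | inl _ => if b then rho1 else 1 - rho1
  | inr _ => if b then rho1 + rho2 else 1 - (rho1 + rho2) end.

Definition wq (R : realType) (t0 : R) (k : int + int) (b : bool) : R :=
  match k with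
  | inl _ => if b then t0^-1 else 1
  | inr _ => if b then t0 else 1 end.

Definition phiN (u : int) (N : nat) (y : int + int -> bool) : Prop :=
  (cnt (fun i => y (inr i)) u N <= cnt (fun i => y (inl i)) u N)%N.

Definition rngF (u : int) (N : nat) : seq (int + int) :=
  [seq inl (u + k%:Z) | k <- index_iota 0 N] ++ [seq inr (u + k%:Z) | k <- index_iota 0 N].

Lemma phiN_dep u N y y' : (forall k, k \in rngF u N -> y k = y' k) ->
  phiN u N y -> phiN u N y'.
Proof.
move=> h; rewrite /phiN (@cnt_eq (fun i => y (inr i)) (fun i => y' (inr i))).
  rewrite (@cnt_eq (fun i => y (inl i)) (fun i => y' (inl i))) //.
  move=> k hk; apply: h; rewrite mem_cat; apply/orP; left.
  by apply/mapP; exists k => //; rewrite mem_index_iota.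
move=> k hk; apply: h; rewrite mem_cat; apply/orP; right.
by apply/mapP; exists k => //; rewrite mem_index_iota.
Qed.

Lemma rngF_uniq u N : uniq (rngF u N).
Proof.
have inj : injective (fun k : nat => u + k%:Z).
  by move=> x y /addrI [].
rewrite /rngF cat_uniq; apply/and3P; split.
- by rewrite map_inj_uniq ?iota_uniq // => x y [] /inj.
- apply/hasPn => x /mapP [k _ ->]; apply/mapP => [[j _]] //.
- by rewrite map_inj_uniq ?iota_uniq // => x y [] /inj.
Qed.

Lemma hp_q (R : realType) d (T : measurableType d) (P : probability T R)
  rho1 rho2 (a s : int -> T -> bool) :
  queue_input P rho1 rho2 a s ->
  forall k b, P [set t | joint a s k t = b] = (pq rho1 rho2 k b)%:E.
Proof.
case=> hm ha hs _ k b; case: b.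
  by case: k => i /=; [exact: ha | exact: hs].
rewrite setXfalse probability_setC ?hm //.
by case: k => i /=; rewrite ?ha ?hs EFinB.
Qed.

Lemma EN_bound (R : realType) d (T : measurableType d) (P : probability T R)
  rho1 rho2 (a s : int -> T -> bool) (t0 : R) u N :
  queue_input P rho1 rho2 a s -> 0 < t0 <= 1 ->
  (P [set t | phiN u N (fun k => joint a s k t)] <=
   (((t0^-1 * rho1 + (1 - rho1)) * (t0 * (rho1 + rho2) + (1 - (rho1 + rho2))))
      ^+ N)%:E)%E.
Proof.
move=> q /andP[t00 t01].
have hX : forall k, measurable [set t | joint a s k t] by case: q.
have hind : mutually_independent_bool P (joint a s) by case: q.
have hp := hp_q q.
have mphi := dep_meas hX (@phiN_dep u N).
have w0 : forall k b, 0 <= wq t0 k b.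
  by case=> i [] /=; rewrite ?invr_ge0 ?ltW.
have u0 : uniq (rngF u N ++ [::]) by rewrite cats0 rngF_uniq.
have hyp : forall y : int + int -> bool, (forall k, k \in [::] -> y k = true) ->
    phiN u N y -> 1 <= 1 * \prod_(k <- rngF u N) wq t0 k (y k).
  move=> y _ hy; rewrite mul1r /rngF big_cat !big_map /=.
  rewrite (prod_if _ (fun j => y (inl (u + j%:Z)))) (prod_if _ (fun j => y (inr (u + j%:Z)))).
  move: hy; rewrite /phiN /cnt.
  set S := (\sum_(0 <= k < N) _)%N; set A := (\sum_(0 <= k < N) _)%N => hSA.
  have e : t0^-1 ^+ A * t0 ^+ A = 1.
    by rewrite exprVn mulVf // expf_neq0 // gt_eqF.
  rewrite -{1}e; apply: ler_wpM2l.
    by apply: exprn_ge0; rewrite invr_ge0 ltW.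
  exact: (ler_wiXn2l (ltW t00) t01 hSA).
have := main_bound hX hind hp mphi w0 (F := rngF u N) (H := [::]) (c := fun _ => true) ler01 u0 hyp.
rewrite /cyl big_nil setIT big_nil mulr1 mul1r => h; apply: le_trans h _.
rewrite lee_fin /rngF big_cat !big_map /= !prodr_const_nat subn0 -exprMn !mul1r.
by [].
Qed.

Definition phiM (i : int) (m : nat) (y : int + int -> bool) : Prop :=
  (cnt (fun j => y (inr j)) i m < cnt (fun j => y (inl j)) i m)%N.

Lemma phiM_dep i m y y' : (forall k, k \in rngF i m -> y k = y' k) ->
  phiM i m y -> phiM i m y'.
Proof.
move=> h; rewrite /phiM (@cnt_eq (fun j => y (inr j)) (fun j => y' (inr j))).
  rewrite (@cnt_eq (fun j => y (inl j)) (fun j => y' (inl j))) //.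
  move=> k hk; apply: h; rewrite mem_cat; apply/orP; left.
  by apply/mapP; exists k => //; rewrite mem_index_iota.
move=> k hk; apply: h; rewrite mem_cat; apply/orP; right.
by apply/mapP; exists k => //; rewrite mem_index_iota.
Qed.

Lemma second_iff (R : realType) {T} (a s : int -> T -> bool) i t :
  eta_tasep R a s i t = Second <->
  [/\ s i t, ~ a i t & ~ (exists m, phiM (i + 1) m (fun k => joint a s k t))].
Proof.
rewrite /eta_tasep; destruct (pselect _) as [hd|hnd] => /=.
  split => // -[hs0 hna hne]; case: hd => hs1 [ha|/Qlen_ge1 hq].
    by exfalso; apply: hna.
  by exfalso; apply: hne; exact: hq.
case hs: (s i t); last by split => // -[].
split => // _; split => // [ha|hm]; apply: hnd; split => //; first by left.
by right; apply/Qlen_ge1.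
Qed.

Lemma ev_meas (R : realType) d (T : measurableType d) (P : probability T R)
  rho1 rho2 (a s : int -> T -> bool) u (L : nat) :
  queue_input P rho1 rho2 a s ->
  measurable [set t | exists i : int, (u <= i <= u + L%:Z)%R /\
                      eta_tasep R a s i t = Second].
Proof.
move=> q.
have hX : forall k, measurable [set t | joint a s k t] by case: q.
have mS : forall i, measurable [set t | eta_tasep R a s i t = Second].
  move=> i.
  rewrite (_ : [set t | _] = [set t | joint a s (inr i) t] `&`
     ~` [set t | joint a s (inl i) t] `&`
     ~` \bigcup_m [set t | phiM (i + 1) m (fun k => joint a s k t)]).
    apply: measurableI; first exact: measurableI (hX _) (measurableC (hX _)).
    apply: measurableC; apply: bigcupT_measurable => m.
    exact: (dep_meas hX (@phiM_dep (i + 1) m)).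
  apply/seteqP; split => t /=.
    by move/second_iff => [h1 h2 h3]; split; [split|move=> [m _ hm]; apply: h3; exists m].
  move=> [[h1 h2] h3]; apply/second_iff; split => // -[m hm]; apply: h3.
  by exists m.
rewrite (_ : [set t | _] = \bigcup_n [set t | (n <= L)%N /\
           eta_tasep R a s (u + n%:Z) t = Second]).
  apply: bigcupT_measurable => n; case: (leqP n L) => hn.
    rewrite (_ : [set t | _] = [set t | eta_tasep R a s (u + n%:Z) t = Second]) //.
    by apply/seteqP; split => t /=; [case|split].
  rewrite (_ : [set t | _] = set0); first exact: measurable0.
  by apply/seteqP; split => t //= [h _].
apply/seteqP; split => t /=.
  move=> [i [hi he]]; exists (absz (i - u)) => //; split; first lia.
  by have -> : u + (absz (i - u))%:Z = i by lia.
move=> [n _ [hn he]]; exists (u + n%:Z); split => //; lia.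
Qed.

Lemma geo_bound (R : realType) (r : R) (M : nat) : 0 < r < 1 ->
  (\sum_(0 <= n <oo) ((r ^+ (M + n))%:E) <= (r ^+ M / (1 - r))%:E)%E.
Proof.
move=> /andP[r0 r1].
apply: lime_le.
  by apply: is_cvg_nneseries => n _ _; rewrite lee_fin exprn_ge0 // ltW.
apply: nearW => n; rewrite sumEFin lee_fin.
have -> : (\sum_(0 <= i < n) r ^+ (M + i) = series (geometric (r ^+ M) r) n)%R.
  by rewrite /series /=; apply: eq_bigr => i _; rewrite exprD.
apply: geometric_le_lim; [exact: exprn_ge0 (ltW r0) | exact r0 | by rewrite ger0_norm ?ltW].
Qed.

Theorem lemma3p2 (R : realType) (rho1 rho2 : R) :
  0 < rho1 < 1 -> 0 < rho2 < 1 - rho1 ->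
  exists C c : R, 0 < C /\ 0 < c /\
    forall (d : measure_display) (T : measurableType d)
           (P : probability T R) (a s : int -> T -> bool),
      queue_input P rho1 rho2 a s ->
      forall u v : int, u <= v ->
        ((1 - C * expR (- c * (v - u)%:~R))%:E <=
         P [set t | exists i : int, (u <= i <= v)%R /\ eta_tasep R a s i t = Second])%E.
Proof.
move=> /andP[r10 r11] /andP[r20 r21].
set t0 := 1 - rho2 / 2.
set r := (t0^-1 * rho1 + (1 - rho1)) * (t0 * (rho1 + rho2) + (1 - (rho1 + rho2))).
have t00 : 0 < t0 by rewrite /t0; lra.
have t01 : t0 <= 1 by rewrite /t0; lra.
have r0 : 0 < r.
  rewrite /r; apply: mulr_gt0; apply: addr_gt0; try lra.
    by apply: mulr_gt0; rewrite ?invr_gt0.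
  by apply: mulr_gt0 => //; lra.
have r1 : r < 1.
  have e : r * t0 = (rho1 + t0 * (1 - rho1)) * (t0 * (rho1 + rho2) + (1 - (rho1 + rho2))).
    rewrite /r; field. by rewrite gt_eqF.
  have key : r * t0 < t0.
    rewrite e /t0; nra.
  by rewrite -(ltr_pM2r t00) mul1r.
exists ((1 - r)^-1), (- ln r); split; first by rewrite invr_gt0 subr_gt0.
split; first by rewrite oppr_gt0 ln_lt0 // r0 r1.
move=> d T P a s q u v huv.
set L := absz (v - u).
have hvu : v - u = L%:Z by rewrite /L gez0_abs // subr_ge0.
have hv : v = u + L%:Z by rewrite -hvu addrC subrK.
rewrite hvu opprK.
rewrite (_ : (L%:Z)%:~R = (L%:R : R)) //.
rewrite expRM_natr lnK ?posrE //.
rewrite hv.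
set ev := [set t | _].
have mev : measurable ev by exact: ev_meas q.
rewrite -(setCK ev) probability_setC; last exact: measurableC.
set Q := P (~` ev).
have hE : forall N, measurable [set t | phiN u N (fun k => joint a s k t)].
  move=> N; have hX : forall k, measurable [set t | joint a s k t] by case: q.
  exact: (dep_meas hX (@phiN_dep u N)).
have Qle : (Q <= (r ^+ L / (1 - r))%:E)%E.
  apply: (@le_trans _ _ (\sum_(0 <= n <oo) P [set t | phiN u (L.+1 + n) (fun k => joint a s k t)])%E).
    apply: (@measure_sigma_subadditive _ _ _ P) => //; first exact: measurableC.
    move=> t /= hnt.
    have [N [hLN hN]] := no_second hnt.
    by exists (N - L.+1)%N => //; rewrite /= subnKC.
  apply: (@le_trans _ _ (\sum_(0 <= n <oo) ((r ^+ (L.+1 + n))%:E))%E).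
    apply: lee_nneseries; first by move=> n _ _; exact: measure_ge0.
    by move=> n _; apply: EN_bound q _; rewrite t00 t01.
  apply: le_trans (geo_bound _ _) _; first by rewrite r0 r1.
  rewrite lee_fin; apply: ler_wpM2r; first by rewrite invr_ge0 subr_ge0 ltW.
  exact: (ler_wiXn2l (ltW r0) (ltW r1) (leqnSn L)).
have Q0 : (0 <= Q)%E by exact: measure_ge0.
have Qfin : Q \is a fin_num by rewrite ge0_fin_numE // (le_lt_trans Qle) ?ltry.
rewrite -(fineK Qfin) in Qle *; rewrite lee_fin in Qle; rewrite -EFinB lee_fin.
rewrite mulrC; lra.
Qed.
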